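(* Let $\lambda=2\cos(\pi/5)$ and let $H_5$ be the subgroup of $SL(2,\mathbb R)$ generated by $S=\begin{pmatrix}0&1\\-1&0\end{pmatrix}$ and $T=\begin{pmatrix}1&\lambda\\0&1\end{pmatrix}$. Let $H_5^5$ be the subgroup of $H_5$ generated by all fifth powers $x^5$, $x\in H_5$, and let $H_5'=[H_5,H_5]$ be the commutator subgroup. Then neither $H_5^5$ nor $H_5'$ is a congruence subgroup.
   Context: For an ideal $A$ of $\mathbb Z[\lambda]$, $H(A)=\{(a_{ij})\in H_5 : a_{11}-1,\ a_{22}-1,\ a_{12},\ a_{21}\in A\}$. A subgroup of $H_5$ is called congruence if it contains $H(A)$ for some nonzero ideal $A$ of $\mathbb Z[\lambda]$. *)

(* Defs.v *)
From HB Require Import structures.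
From mathcomp Require Import all_boot all_order all_algebra.
From mathcomp Require Import all_classical all_reals all_analysis.
Set Implicit Arguments. Unset Strict Implicit. Unset Printing Implicit Defensive.
Import Order.TTheory GRing.Theory Num.Theory.
Local Open Scope ring_scope.

Section H5.
Variable R : realType.

Definition lam : R := 2 * cos (pi / 5).

Definition mx2 (a b c d : R) : 'M[R]_2 :=
  \matrix_(i < 2, j < 2)
    if (i == 0 :> nat) then (if (j == 0 :> nat) then a else b)
    else (if (j == 0 :> nat) then c else d).

Definition i0 : 'I_2 := @Ordinal 2 0 isT.
Definition i1 : 'I_2 := @Ordinal 2 1 isT.

Definition Smx : 'M[R]_2 := mx2 0 1 (-1) 0.
Definition Tmx : 'M[R]_2 := mx2 1 lam 0 1.

Inductive gen (X : 'M[R]_2 -> Prop) : 'M[R]_2 -> Prop :=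
  | gen_one : gen X 1%:M
  | gen_elt x : X x -> gen X x
  | gen_mul x y : gen X x -> gen X y -> gen X (x *m y)
  | gen_inv x : gen X x -> gen X (invmx x).

Definition H5 : 'M[R]_2 -> Prop := gen (fun x => x = Smx \/ x = Tmx).

Definition H5_fifth : 'M[R]_2 -> Prop :=
  gen (fun m => exists x, H5 x /\ m = x *m x *m x *m x *m x).

Definition H5_comm : 'M[R]_2 -> Prop :=
  gen (fun m => exists x y, H5 x /\ H5 y /\
                  m = invmx x *m invmx y *m x *m y).

Definition Zlam (x : R) : Prop :=
  exists a b : int, x = a%:~R + b%:~R * lam.

Definition is_ideal (A : R -> Prop) : Prop :=
  [/\ forall x, A x -> Zlam x,
      A 0,
      forall x y, A x -> A y -> A (x - y)
    & forall r x, Zlam r -> A x -> A (r * x)].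

Definition nonzero_ideal (A : R -> Prop) : Prop :=
  is_ideal A /\ exists x, A x /\ x != 0.

Definition HA (A : R -> Prop) (m : 'M[R]_2) : Prop :=
  [/\ H5 m, A (m i0 i0 - 1), A (m i1 i1 - 1), A (m i0 i1) & A (m i1 i0)].

Definition congruence (G : 'M[R]_2 -> Prop) : Prop :=
  exists A, nonzero_ideal A /\ forall m, HA A m -> G m.

End H5.

(* Main.v *)
Require Import Defs.
From HB Require Import structures.
From mathcomp Require Import all_boot all_order all_algebra.
From mathcomp Require Import all_classical all_reals all_analysis.
From mathcomp Require Import ring lra zify.
From Stdlib Require Import Classical_Prop Classical_Pred_Type.
Set Implicit Arguments. Unset Strict Implicit. Unset Printing Implicit Defensive.
Import Order.TTheory GRing.Theory Num.Theory.
Local Open Scope ring_scope.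

Section Aux.
Variable R : realType.
Local Notation lam := (@lam R).

Lemma lam2 : lam ^+ 2 = lam + 1.
Proof.
set t : R := pi / 5.
set c := cos t; set s := sin t.
have cpos : 0 < c.
  apply: cos_gt0_pihalf; have := pi_gt0 R; rewrite /t => hp; apply/andP; split; lra.
have h2 : cos (t + t) = 2 * c ^+ 2 - 1.
  have := sin2cos2 t; rewrite cosD -/c -/s => e; ring: e.
have s2 : sin (t + t) = 2 * s * c by rewrite sinD -/c -/s; ring.
have h3 : cos (t + t + t) = 4 * c ^+ 3 - 3 * c.
  rewrite cosD h2 s2 -/c -/s; have := sin2cos2 t; rewrite -/s -/c => e.
  ring: e.
have e3 : t + t + t = pi - (t + t) by rewrite /t; field.
have h3' : cos (t + t + t) = - cos (t + t).
  by rewrite e3 cosB cospi sinpi; ring.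
rewrite h3 h2 in h3'.
have : (c + 1) * (4 * c ^+ 2 - 2 * c - 1) = 0.
  have E : (c + 1) * (4 * c ^+ 2 - 2 * c - 1) = (4 * c ^+ 3 - 3 * c) - - (2 * c ^+ 2 - 1) by ring.
  by rewrite E h3' subrr.
move/eqP; rewrite mulf_eq0 => /orP [|/eqP h].
  move=> /eqP h; lra.
rewrite /lam /Defs.lam -/t -/c.
apply/eqP; rewrite -subr_eq0; apply/eqP.
have E : (2 * c) ^+ 2 - (2 * c + 1) = 4 * c ^+ 2 - 2 * c - 1 by ring.
by rewrite E h.
Qed.

Lemma lam_gt0 : 0 < lam.
Proof.
rewrite /lam /Defs.lam; apply: mulr_gt0 => //; apply: cos_gt0_pihalf.
have := pi_gt0 R => hp; apply/andP; split; lra.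
Qed.

Lemma lam_gt1 : 1 < lam.
Proof. have := lam2; have := lam_gt0; nra. Qed.


Local Notation Sm := (@Smx R).
Local Notation Tm := (@Tmx R).
Local Notation mx2 := (@mx2 R).
Local Notation i0 := (@i0).
Local Notation i1 := (@i1).

Lemma mx2E a b c d :
  [/\ mx2 a b c d i0 i0 = a, mx2 a b c d i0 i1 = b,
      mx2 a b c d i1 i0 = c & mx2 a b c d i1 i1 = d].
Proof. by rewrite !mxE. Qed.

Lemma mulE (A B : 'M[R]_2) i j : (A *m B) i j = A i i0 * B i0 j + A i i1 * B i1 j.
Proof.
rewrite mxE big_ord_recl big_ord1.
by congr (A i _ * B _ j + A i _ * B _ j); apply: val_inj.
Qed.

Lemma ord2P (i : 'I_2) : i = i0 \/ i = i1.
Proof. by case: i => [[|[|]]] //= h; [left|right]; apply: val_inj. Qed.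

Lemma mx2_eq (A B : 'M[R]_2) : A i0 i0 = B i0 i0 -> A i0 i1 = B i0 i1 ->
  A i1 i0 = B i1 i0 -> A i1 i1 = B i1 i1 -> A = B.
Proof.
move=> h1 h2 h3 h4; apply/matrixP => i j.
by case: (ord2P i) => ->; case: (ord2P j) => ->.
Qed.

Lemma mx2_eta (A : 'M[R]_2) : A = mx2 (A i0 i0) (A i0 i1) (A i1 i0) (A i1 i1).
Proof. by apply: mx2_eq; rewrite !mxE. Qed.

Lemma mx2M a b c d a' b' c' d' :
  mx2 a b c d *m mx2 a' b' c' d' =
  mx2 (a * a' + b * c') (a * b' + b * d') (c * a' + d * c') (c * b' + d * d').
Proof. by apply: mx2_eq; rewrite !mulE !mxE. Qed.

Lemma mx2_1 : 1%:M = mx2 1 0 0 1 :> 'M[R]_2.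
Proof. by apply: mx2_eq; rewrite !mxE. Qed.

Definition Um : 'M[R]_2 := Sm *m Tm.
Definition Lm (b : bool) := if b then Um else Sm.
Definition ev (w : seq bool) : 'M[R]_2 := foldr (fun b m => Lm b *m m) 1%:M w.

Lemma ev_cat w1 w2 : ev (w1 ++ w2) = ev w1 *m ev w2.
Proof. by elim: w1 => [|b w IH] /=; rewrite ?mul1mx // IH mulmxA. Qed.

Definition zl := (int * int)%type.
Definition zR (x : zl) : R := x.1%:~R + x.2%:~R * lam.
Definition zmul (x y : zl) : zl :=
  (x.1 * y.1 + x.2 * y.2, x.1 * y.2 + x.2 * y.1 + x.2 * y.2)%R.
Definition zadd (x y : zl) : zl := (x.1 + y.1, x.2 + y.2)%R.
Definition zm := ((zl * zl) * (zl * zl))%type.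
Definition zmR (m : zm) := mx2 (zR m.1.1) (zR m.1.2) (zR m.2.1) (zR m.2.2).
Definition zmmul (m n : zm) : zm :=
  ((zadd (zmul m.1.1 n.1.1) (zmul m.1.2 n.2.1), zadd (zmul m.1.1 n.1.2) (zmul m.1.2 n.2.2)),
   (zadd (zmul m.2.1 n.1.1) (zmul m.2.2 n.2.1), zadd (zmul m.2.1 n.1.2) (zmul m.2.2 n.2.2))).

Lemma zR_mul x y : zR (zmul x y) = zR x * zR y.
Proof.
case: x y => [p q] [p' q']; rewrite /zR /zmul /= !intrD !intrM.
have e := lam2; ring: e.
Qed.

Lemma zR_add x y : zR (zadd x y) = zR x + zR y.
Proof. by case: x y => [p q] [p' q']; rewrite /zR /zadd /= !intrD; ring. Qed.

Lemma zmR_mul m n : zmR (zmmul m n) = zmR m *m zmR n.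
Proof. by rewrite /zmR mx2M /= !zR_add !zR_mul. Qed.

Definition zid : zm := (((1,0),(0,0)),((0,0),(1,0)))%R.
Definition zS : zm := (((0,0),(1,0)),((-1,0),(0,0)))%R.
Definition zU : zm := (((0,0),(1,0)),((-1,0),(0,-1)))%R.
Definition zL (b : bool) := if b then zU else zS.
Definition evZ (w : seq bool) : zm := foldr (fun b m => zmmul (zL b) m) zid w.

Lemma zid_R : zmR zid = 1%:M.
Proof. by rewrite mx2_1 /zmR /zR /=; congr mx2; ring. Qed.

Lemma zS_R : zmR zS = Sm.
Proof. by rewrite /zmR /zR /Smx /=; congr mx2; ring. Qed.

Lemma zU_R : zmR zU = Um.
Proof. rewrite /Um /Smx /Tmx mx2M /zmR /zR /=; congr mx2; ring. Qed.

Lemma evZE w : ev w = zmR (evZ w).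
Proof.
elim: w => [|b w IH] /=; first by rewrite zid_R.
by rewrite zmR_mul IH; case: b => /=; rewrite ?zU_R ?zS_R.
Qed.

Lemma evZ_cat w1 w2 : zmR (evZ (w1 ++ w2)) = zmR (evZ w1) *m zmR (evZ w2).
Proof. by rewrite -!evZE ev_cat. Qed.


Lemma mx2N1 : - 1%:M = mx2 (-1) 0 0 (-1) :> 'M[R]_2.
Proof. by apply: mx2_eq; rewrite !mxE /=; ring. Qed.

Lemma evSS : ev [:: false; false] = - 1%:M.
Proof.
rewrite evZE (_ : evZ _ = (((-1,0),(0,0)),((0,0),(-1,0)))%R); last by vm_compute.
by rewrite mx2N1 /zmR /zR /=; congr mx2; ring.
Qed.

Lemma evU5 : ev (nseq 5 true) = 1%:M.
Proof.
rewrite evZE (_ : evZ _ = zid); last by vm_compute.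
exact: zid_R.
Qed.

Definition act (m : 'M[R]_2) (v : R * R) : R * R :=
  (m i0 i0 * v.1 + m i0 i1 * v.2, m i1 i0 * v.1 + m i1 i1 * v.2).

Lemma act_mul A B v : act (A *m B) v = act A (act B v).
Proof. by case: v => p q; rewrite /act /= !mulE; congr pair; ring. Qed.

Lemma act1 v : act 1%:M v = v.
Proof. by case: v => p q; rewrite /act mx2_1 !mxE /=; congr pair; ring. Qed.

Lemma actN1 v : act (- 1%:M) v = (- v.1, - v.2).
Proof. by case: v => p q; rewrite /act mx2N1 !mxE /=; congr pair; ring. Qed.

Definition PA (v : R * R) := 0 < v.1 * v.2.
Definition PA' (v : R * R) := 0 < v.1 * v.2 /\ v.1 != v.2.
Definition PB (v : R * R) := v.1 * v.2 < 0.
Definition PB' (v : R * R) := v.1 * v.2 < 0 /\ v.1 + v.2 != 0.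

Lemma actS v : act Sm v = (v.2, - v.1).
Proof. by case: v => p q; rewrite /act /Smx !mxE /=; congr pair; ring. Qed.

Lemma SB v : PB v -> PA (act Sm v).
Proof. by case: v => p q; rewrite actS /PA /PB /= => h; nra. Qed.

Lemma SB' v : PB' v -> PA' (act Sm v).
Proof.
case: v => p q; rewrite actS /PA' /PB' /= => -[h1 h2]; split; first nra.
by apply: contra h2 => /eqP e; rewrite e addrN.
Qed.

Lemma UA k v : (0 < k <= 4)%N -> PA v -> PB' (act (ev (nseq k true)) v).
Proof.
have l1 := lam_gt1; have l2 := lam2.
case: v => p q; rewrite /PA /PB' /= => /andP [k0 k4] h.
have pq : p != 0 /\ q != 0.
  by split; apply/eqP => e; move: h; rewrite e ?mul0r ?mulr0 ltxx.
case: k k0 k4 => [|[|[|[|[|k]]]]] // _ _.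
- rewrite evZE (_ : evZ _ = zU); last by vm_compute.
  rewrite /act /zmR /zR !mxE /=; split; first nra.
  apply/eqP => e; nra.
- rewrite evZE (_ : evZ _ = (((-1,0),(0,-1)),((0,1),(0,1)))%R); last by vm_compute.
  rewrite /act /zmR /zR !mxE /=; split; first nra.
  apply/eqP => e; case: pq => /eqP pq _; apply: pq; nra.
- rewrite evZE (_ : evZ _ = (((0,1),(0,1)),((0,-1),(-1,0)))%R); last by vm_compute.
  rewrite /act /zmR /zR !mxE /=; split; first nra.
  apply/eqP => e; case: pq => _ /eqP pq; apply: pq; nra.
- rewrite evZE (_ : evZ _ = (((0,-1),(-1,0)),((1,0),(0,0)))%R); last by vm_compute.
  rewrite /act /zmR /zR !mxE /=; split; first nra.
  apply/eqP => e; nra.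
Qed.


Definition red (w : seq bool) :=
  (forall l r, w <> l ++ [:: false; false] ++ r) /\
  (forall l r, w <> l ++ nseq 5 true ++ r).

Lemma red_suf l w : red (l ++ w) -> red w.
Proof.
case=> h1 h2; split=> l' r e.
  by apply: (h1 (l ++ l') r); rewrite e catA.
by apply: (h2 (l ++ l') r); rewrite e catA.
Qed.

Lemma red_nseq k w : red (nseq k true ++ w) -> (k <= 4)%N.
Proof.
case=> _ h; rewrite leqNgt; apply/negP => k5.
apply: (h [::] (nseq (k - 5) true ++ w)); rewrite cat0s.
by rewrite catA -nseqD subnKC.
Qed.

Lemma decw w : exists k w', w = nseq k true ++ w' /\
  (w' = [::] \/ exists w3, w' = false :: w3).
Proof.
elim: w => [|b w [k [w' [-> h]]]]; first by exists 0%N, [::]; split => //; left.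
case: b.
  by exists k.+1, w'.
by exists 0%N, (false :: nseq k true ++ w'); split => //; right; eexists.
Qed.

Lemma last_nsT k x : last x (nseq k.+1 true) = true.
Proof. by elim: k x => [|k IH] x //=; apply: IH. Qed.

Lemma evS w : ev (false :: w) = Sm *m ev w.
Proof. by []. Qed.

Lemma PA'A v : PA' v -> PA v. Proof. by case. Qed.

Lemma core n w : (size w <= n)%N -> red (false :: w) -> forall v,
  (if last false w then PA v else PB v) ->
  PA (act (ev (false :: w)) v) /\ (w != [::] -> PA' (act (ev (false :: w)) v)).
Proof.
elim: n w => [|n IH] w.
  rewrite leqn0 => /nilP -> _ v /= hv.
  by rewrite mulmx1; split => //; exact: SB.
case: (decw w) => k [w' [-> hw']] hs hr v hv.
have hk0 : w' != [::] -> (0 < k)%N.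
  move=> ne; rewrite lt0n; apply/eqP => k0; move: hw' ne; rewrite k0 /= in hr *.
  case=> [->//|[w3 e]] _; case: hr => h _; apply: (h [::] w3); by rewrite e.
have hk4 : (k <= 4)%N by apply: (red_nseq (red_suf (l := [:: false]) hr)).
rewrite evS ev_cat !act_mul.
case: hw' hk0 => [e|[w3 e]] hk0; subst w'.
- rewrite cats0 in hv hs hr *.
  case: k hk4 hk0 hv hs hr => [|k] hk4 hk0 hv hs hr.
    by move: hv => /= hv; rewrite /= !act1; split => //; exact: SB.
  rewrite last_nsT in hv.
  rewrite [ev [::]]/= act1.
  have := SB' (UA (k := k.+1) (v := v) hk4 hv) => h.
  by split => //; exact: PA'A.
- have kp : (0 < k)%N by apply: hk0.
  have hr3 : red (false :: w3).
    by apply: (red_suf (l := false :: nseq k true)); rewrite -cat_cons in hr.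
  have hs3 : (size w3 <= n)%N.
    by move: hs kp; rewrite size_cat size_nseq /=; lia.
  rewrite last_cat /= in hv.
  have [ih _] := IH w3 hs3 hr3 v hv.
  have := SB' (UA (k := k) (v := act (ev (false :: w3)) v) (introT andP (conj kp hk4)) ih) => h.
  by split => //; exact: PA'A.
Qed.


Lemma pm1_act m v : (m = 1%:M \/ m = - 1%:M) ->
  act m v = v \/ act m v = (- v.1, - v.2).
Proof. by case=> ->; [left; rewrite act1 | right; rewrite actN1]. Qed.

Definition vv (b : bool) : R * R := if b then (1, 1) else (1, -1).

Lemma pp_aux x (b : bool) : PA x -> (b -> PA' x) ->
  ~ (x = vv b \/ x = (- (vv b).1, - (vv b).2)).
Proof.
rewrite /vv; case: b => hA hA'.
  have [_ hne] := hA' isT.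
  by case=> e; move: hne; rewrite e /= eqxx.
by case=> e; move: hA; rewrite e /PA /=; lra.
Qed.

Lemma pp_aux2 y (b : bool) : PB' y ->
  ~ (y = vv b \/ y = (- (vv b).1, - (vv b).2)).
Proof.
rewrite /vv; case=> h1 h2; case: b => -[] e; rewrite e /= in h1 h2;
  try (by move: h1; lra); by move/negP: h2; apply; apply/eqP; lra.
Qed.

Lemma last_ne (w : seq bool) : last false w -> w != [::].
Proof. by case: w. Qed.

Lemma pp w : red w -> false \in w -> ~ (ev w = 1%:M \/ ev w = - 1%:M).
Proof.
move=> hr hin hpm.
case: (decw w) => k [w' [ew hw']]; subst w.
have hk4 := red_nseq hr.
case: hw' => [e|[w3 e]]; subst w'.
  by move: hin; rewrite cats0 mem_nseq andbF.
have hr3 := red_suf hr.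
have hv : (if last false w3 then PA (vv (last false w3))
           else PB (vv (last false w3))).
  by rewrite /vv; case: (last false w3); rewrite /PA /PB /= ?mulr1 ?mulrN1 ?ltrN10 ?ltr01.
have [hA hA'] := core (leqnn _) hr3 hv.
have := pm1_act (vv (last false w3)) hpm; rewrite ev_cat act_mul.
clear hin hpm; case: k hk4 hr => [|k] hk4 hr.
  rewrite [ev (nseq 0 true)]/= act1.
  by apply: pp_aux => // /last_ne; exact: hA'.
exact: pp_aux2 (UA (k := k.+1) hk4 hA).
Qed.


Lemma allT w : false \notin w -> w = nseq (size w) true.
Proof.
elim: w => [|b w IH] //=; rewrite in_cons negb_or => /andP [hb /IH {1}->].
by case: b hb.
Qed.

Lemma noS w : red w -> false \notin w -> (ev w = 1%:M \/ ev w = - 1%:M) -> w = [::].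
Proof.
move=> hr hn hpm; move: (allT hn) hr hpm => ->.
case: (size w) => [//|k] hr hpm; exfalso.
have hk4 : (k.+1 <= 4)%N by apply: (red_nseq (w := [::])); rewrite cats0.
have hA : PA (vv true) by rewrite /PA /= mulr1 ltr01.
have := pm1_act (vv true) hpm.
exact: pp_aux2 (UA (k := k.+1) hk4 hA).
Qed.

Lemma wd n w : (size w <= n)%N -> (ev w = 1%:M \/ ev w = - 1%:M) -> (5 %| count id w)%N.
Proof.
elim: n w => [|n IH] w hs hpm.
  by move: hs; rewrite leqn0 => /nilP ->.
case: (classic (red w)) => hr.
  case: (boolP (false \in w)) => hin.
    by exfalso; exact: pp hr hin hpm.
  by rewrite (noS hr hin hpm).
case: (not_and_or _ _ hr) => /not_all_ex_not [l] /not_all_ex_not [r] /NNPP e; subst w.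
- have : (5 %| count id (l ++ r))%N.
    apply: IH; first by move: hs; rewrite !size_cat /=; lia.
    move: hpm; rewrite !ev_cat evSS mulNmx mul1mx mulmxN => -[] e.
      by right; rewrite -[ev l *m ev r]opprK e.
    by left; rewrite -[ev l *m ev r]opprK e opprK.
  by rewrite !count_cat.
- have : (5 %| count id (l ++ r))%N.
    apply: IH; first by move: hs; rewrite !size_cat size_nseq /=; lia.
    by move: hpm; rewrite !ev_cat evU5 mul1mx.
  by rewrite !count_cat /= addnCA => h; rewrite dvdn_addr.
Qed.


Definition il (b : bool) := if b then nseq 4 true else nseq 3 false.
Definition invw (w : seq bool) := flatten (map il (rev w)).

Lemma invw_cons b w : invw (b :: w) = invw w ++ il b.
Proof. by rewrite /invw rev_cons -cats1 map_cat flatten_cat /= cats0. Qed.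

Lemma ev_il b : Lm b *m ev (il b) = 1%:M.
Proof.
have -> : Lm b *m ev (il b) = ev (b :: il b) by [].
rewrite evZE (_ : evZ _ = zid) ?zid_R //.
by case: b; vm_compute.
Qed.

Lemma ev_invw w : ev w *m ev (invw w) = 1%:M.
Proof.
elim: w => [|b w IH]; first by rewrite /= mul1mx.
rewrite invw_cons ev_cat /=.
by rewrite -mulmxA (mulmxA (ev w)) IH mul1mx ev_il.
Qed.

Lemma cnt_invw w : count id (invw w) = (4 * count id w)%N.
Proof.
elim: w => [|b w IH] //; rewrite invw_cons count_cat IH /=.
by case: b => /=; lia.
Qed.

Lemma inv_ev w : invmx (ev w) = ev (invw w).
Proof.
have [hu _] := mulmx1_unit (ev_invw w).
by rewrite -[RHS](mulKmx hu) ev_invw mulmx1.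
Qed.

Definition Tw := [:: false; false; false; true].

Lemma ev_Tw : ev Tw = Tm.
Proof.
rewrite evZE (_ : evZ _ = (((1,0),(0,1)),((0,0),(1,0)))%R); last by vm_compute.
by rewrite /zmR /zR /Tmx /=; congr mx2; ring.
Qed.

Lemma H5w x : H5 x -> exists w, x = ev w.
Proof.
elim => [|y [->|->]|y z _ [w1 ->] _ [w2 ->]|y _ [w ->]].
- by exists [::].
- by exists [:: false]; rewrite /= mulmx1.
- by exists Tw; rewrite ev_Tw.
- by exists (w1 ++ w2); rewrite ev_cat.
- by exists (invw w); rewrite inv_ev.
Qed.

Lemma wH5 w : H5 (ev w).
Proof.
elim: w => [|b w IH]; first exact: gen_one.
apply: gen_mul => //; case: b => /=.
  by apply: gen_mul; apply: gen_elt; [left|right].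
by apply: gen_elt; left.
Qed.

Definition Kp (m : 'M[R]_2) := exists w, m = ev w /\ (5 %| count id w)%N.

Lemma Kp_mul x y : Kp x -> Kp y -> Kp (x *m y).
Proof.
move=> [w1 [-> h1]] [w2 [-> h2]]; exists (w1 ++ w2).
by rewrite ev_cat count_cat dvdn_add.
Qed.

Lemma Kp_inv x : Kp x -> Kp (invmx x).
Proof.
move=> [w [-> h]]; exists (invw w).
by rewrite inv_ev cnt_invw dvdn_mull.
Qed.

Lemma fifth_K m : H5_fifth m -> Kp m.
Proof.
elim => [|y [x [hx ->]]|y z _ h1 _ h2|y _ h]; last 2 first.
- exact: Kp_mul.
- exact: Kp_inv.
- by exists [::].
have [w ->] := H5w hx.
exists (w ++ w ++ w ++ w ++ w); rewrite !ev_cat !mulmxA; split => //.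
rewrite !count_cat.
have -> : (count id w + (count id w + (count id w + (count id w + count id w))) = 5 * count id w)%N by lia.
exact: dvdn_mulr.
Qed.

Lemma comm_K m : H5_comm m -> Kp m.
Proof.
elim => [|y [x [z [hx [hz ->]]]]|y u _ h1 _ h2|y _ h]; last 2 first.
- exact: Kp_mul.
- exact: Kp_inv.
- by exists [::].
have [w1 ->] := H5w hx; have [w2 ->] := H5w hz.
exists (invw w1 ++ invw w2 ++ w1 ++ w2); rewrite !ev_cat !mulmxA !inv_ev; split => //.
rewrite !count_cat !cnt_invw.
have -> : (4 * count id w1 + (4 * count id w2 + (count id w1 + count id w2)) = 5 * (count id w1 + count id w2))%N by lia.
exact: dvdn_mulr.
Qed.

Lemma notK w : ~~ (5 %| count id w)%N -> ~ Kp (ev w).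
Proof.
move=> hn [w' [e h']]; apply/negP: hn.
have : (5 %| count id (w ++ invw w'))%N.
  apply: (wd (leqnn _)); left; by rewrite ev_cat e ev_invw.
rewrite count_cat cnt_invw dvdn_addl ?negbK //; last exact: dvdn_mull.
Qed.


Definition Zl (x : R) := exists z : zl, x = zR z.
Definition dz (n : int) (x : R) := exists z : zl, x = n%:~R * zR z.

Lemma Zl_zR z : Zl (zR z). Proof. by exists z. Qed.
Lemma Zl_int (k : int) : Zl k%:~R.
Proof. by exists (k, 0); rewrite /zR /=; ring. Qed.
Lemma Zl_lam : Zl lam.
Proof. by exists (0, 1); rewrite /zR /=; ring. Qed.
Lemma Zl_add x y : Zl x -> Zl y -> Zl (x + y).
Proof. by move=> [a ->] [b ->]; exists (zadd a b); rewrite zR_add. Qed.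
Lemma Zl_mul x y : Zl x -> Zl y -> Zl (x * y).
Proof. by move=> [a ->] [b ->]; exists (zmul a b); rewrite zR_mul. Qed.
Lemma Zl_opp x : Zl x -> Zl (- x).
Proof.
move=> [[p q] ->]; exists (- p, - q)%R; rewrite /zR /= !intrN; ring.
Qed.
Lemma Zl_sub x y : Zl x -> Zl y -> Zl (x - y).
Proof. by move=> hx hy; apply: Zl_add => //; apply: Zl_opp. Qed.
Lemma Zl1 : Zl 1. Proof. by exists (1, 0); rewrite /zR /=; ring. Qed.
Lemma Zl0 : Zl 0. Proof. by exists (0, 0); rewrite /zR /=; ring. Qed.

Lemma dz_mk n y : Zl y -> dz n (n%:~R * y).
Proof. by move=> [z ->]; exists z. Qed.
Lemma dz_Zl n x : dz n x -> Zl x.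
Proof. by move=> [z ->]; apply: Zl_mul; [apply: Zl_int | apply: Zl_zR]. Qed.
Lemma dz_add n x y : dz n x -> dz n y -> dz n (x + y).
Proof.
move=> [a ->] [b ->]; rewrite -mulrDr; apply: dz_mk.
by apply: Zl_add; apply: Zl_zR.
Qed.
Lemma dz_opp n x : dz n x -> dz n (- x).
Proof. by move=> [a ->]; rewrite -mulrN; apply: dz_mk; apply: Zl_opp; apply: Zl_zR. Qed.
Lemma dz_sub n x y : dz n x -> dz n y -> dz n (x - y).
Proof. by move=> hx hy; apply: dz_add => //; apply: dz_opp. Qed.
Lemma dz0 n : dz n 0.
Proof. by exists (0, 0); rewrite /zR /=; ring. Qed.
Lemma dz_mulr n x y : dz n x -> Zl y -> dz n (x * y).
Proof. by move=> [a ->] hy; rewrite -mulrA; apply: dz_mk; apply: Zl_mul => //; apply: Zl_zR. Qed.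
Lemma dz_mull n x y : dz n x -> Zl y -> dz n (y * x).
Proof. by move=> hx hy; rewrite mulrC; apply: dz_mulr. Qed.
Lemma dz_mul m n x y : dz m x -> dz n y -> dz (m * n) (x * y).
Proof.
move=> [a ->] [b ->].
have -> : m%:~R * zR a * (n%:~R * zR b) = (m * n)%:~R * (zR a * zR b) :> R by rewrite intrM; ring.
by apply: dz_mk; apply: Zl_mul; apply: Zl_zR.
Qed.
Lemma dz_dvd m n x : dz (m * n) x -> dz m x.
Proof.
move=> [a ->]; rewrite intrM -mulrA; apply: dz_mk.
by apply: Zl_mul; [apply: Zl_int | apply: Zl_zR].
Qed.
Lemma dz_int_mul m n x : dz n x -> dz (m * n) (m%:~R * x).
Proof. by move=> [a ->]; exists a; rewrite intrM; ring. Qed.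

Definition e00 (m : 'M[R]_2) := m i0 i0.
Lemma ev_Zl w i j : Zl (ev w i j).
Proof.
rewrite evZE /zmR; case: (ord2P i) => ->; case: (ord2P j) => ->; rewrite !mxE /=;
  apply: Zl_zR.
Qed.

Definition dt (m : 'M[R]_2) := m i0 i0 * m i1 i1 - m i0 i1 * m i1 i0.
Lemma dt_mul A B : dt (A *m B) = dt A * dt B.
Proof. by rewrite /dt !mulE; ring. Qed.
Lemma dt_ev w : dt (ev w) = 1.
Proof.
elim: w => [|b w IH] /=; first by rewrite /dt !mxE /=; ring.
rewrite dt_mul IH mulr1; case: b => /=.
  by rewrite -zU_R /dt /zmR /zR !mxE /=; ring.
by rewrite /dt /Smx !mxE /=; ring.
Qed.


Definition Tiw := invw Tw.
Definition Tp (k : int) : seq bool :=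
  match k with Posz n => flatten (nseq n Tw) | Negz n => flatten (nseq n.+1 Tiw) end.

Lemma ev_Tiw : ev Tiw = mx2 1 (- lam) 0 1.
Proof.
rewrite evZE (_ : evZ _ = (((1,0),(0,-1)),((0,0),(1,0)))%R); last by vm_compute.
by rewrite /zmR /zR /=; congr mx2; ring.
Qed.

Lemma ev_fl n x s : ev x = mx2 1 s 0 1 -> ev (flatten (nseq n x)) = mx2 1 (n%:R * s) 0 1.
Proof.
move=> hx; elim: n => [|n IH]; first by rewrite /= mx2_1; congr mx2; ring.
rewrite /= ev_cat hx IH mx2M; congr mx2; rewrite ?mulrS; ring.
Qed.

Lemma ev_Tp k : ev (Tp k) = mx2 1 (k%:~R * lam) 0 1.
Proof.
case: k => n; rewrite /Tp.
  by rewrite (ev_fl _ ev_Tw) pmulrn.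
rewrite (ev_fl _ ev_Tiw) NegzE intrN pmulrn; congr mx2; ring.
Qed.

Lemma cnt_fl n x : count id (flatten (nseq n x)) = (n * count id x)%N.
Proof. by elim: n => [|n IH] //=; rewrite count_cat IH mulSn. Qed.

Lemma cnt_Tp k : exists t : int, (count id (Tp k))%:Z = k + 5 * t.
Proof.
case: k => n; rewrite /Tp.
  by exists 0; rewrite cnt_fl /= muln1; lia.
exists n.+1%:Z; rewrite cnt_fl (_ : count id Tiw = 4%N) //; rewrite NegzE; lia.
Qed.

Definition Lw (k : int) := false :: Tp k ++ [:: false; false; false].

Lemma ev_Lw k : ev (Lw k) = mx2 1 0 (- (k%:~R * lam)) 1.
Proof.
rewrite /Lw evS ev_cat ev_Tp.
rewrite (_ : ev [:: false; false; false] = mx2 0 (-1) 1 0); last first.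
  rewrite evZE (_ : evZ _ = (((0,0),(-1,0)),((1,0),(0,0)))%R); last by vm_compute.
  by rewrite /zmR /zR /=; congr mx2; ring.
by rewrite /Smx !mx2M; congr mx2; ring.
Qed.

Lemma ev_adj w : ev (invw w) =
  mx2 (ev w i1 i1) (- ev w i0 i1) (- ev w i1 i0) (ev w i0 i0).
Proof.
have h := dt_ev w; rewrite /dt in h.
have hA : mx2 (ev w i1 i1) (- ev w i0 i1) (- ev w i1 i0) (ev w i0 i0) *m ev w = 1%:M.
  rewrite [X in _ *m X](mx2_eta (ev w)) mx2M mx2_1; congr mx2; first [ring | by rewrite -h; ring].
by rewrite -[ev (invw w)]mul1mx -hA -mulmxA ev_invw mulmx1.
Qed.

Lemma ev_conj w k :
  ev (w ++ Tp k ++ invw w) =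
  mx2 (1 - k%:~R * lam * (ev w i0 i0 * ev w i1 i0))
      (k%:~R * lam * (ev w i0 i0 * ev w i0 i0))
      (- (k%:~R * lam * (ev w i1 i0 * ev w i1 i0)))
      (1 + k%:~R * lam * (ev w i0 i0 * ev w i1 i0)).
Proof.
rewrite !ev_cat ev_Tp ev_adj mulmxA.
have h := dt_ev w; rewrite /dt in h.
have E : forall a b c d : R, mx2 a b c d *m mx2 1 (k%:~R * lam) 0 1 *m mx2 d (-b) (-c) a =
   mx2 ((a * d - b * c) - k%:~R * lam * (a * c)) (k%:~R * lam * (a * a))
       (- (k%:~R * lam * (c * c))) ((a * d - b * c) + k%:~R * lam * (a * c)).
  by move=> a b c d; rewrite !mx2M; congr mx2; ring.
by rewrite {1}(mx2_eta (ev w)) E h.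
Qed.


Lemma m00 a b c d : mx2 a b c d i0 i0 = a. Proof. by rewrite mxE. Qed.
Lemma m01 a b c d : mx2 a b c d i0 i1 = b. Proof. by rewrite mxE. Qed.
Lemma m10 a b c d : mx2 a b c d i1 i0 = c. Proof. by rewrite mxE. Qed.
Lemma m11 a b c d : mx2 a b c d i1 i1 = d. Proof. by rewrite mxE. Qed.

Lemma ev_LgL w k1 k2 : ev (Lw k1 ++ w ++ Lw k2) =
  mx2 (ev w i0 i0 + ev w i0 i1 * - (k2%:~R * lam)) (ev w i0 i1)
      (- (k1%:~R * lam) * ev w i0 i0 + ev w i1 i0 +
       (- (k1%:~R * lam) * ev w i0 i1 + ev w i1 i1) * - (k2%:~R * lam))
      (- (k1%:~R * lam) * ev w i0 i1 + ev w i1 i1).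
Proof.
have E : forall a b c d y1 y2 : R, mx2 1 0 y1 1 *m mx2 a b c d *m mx2 1 0 y2 1 =
  mx2 (a + b * y2) b (y1 * a + c + (y1 * b + d) * y2) (y1 * b + d).
  by move=> a b c d y1 y2; rewrite !mx2M; congr mx2; ring.
by rewrite !ev_cat !ev_Lw mulmxA {1}(mx2_eta (ev w)) E.
Qed.

Definition G0 (i : nat) (w : seq bool) :=
  [/\ dz (5 ^+ i.+1) (ev w i1 i0), dz 5 (ev w i0 i0 - lam)
    & dz 5 (ev w i1 i1 - (lam - 1))].

Definition w0 : seq bool :=
  flatten [seq (if c then Tw else [:: false]) |
           c <- [:: false; false; false; true; false; true; true; false; true; true;
                    false; true; true; false; true; true; true; true; false]].

Lemma G0_base : G0 0 w0.
Proof.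
rewrite /G0 evZE (_ : evZ w0 = (((45,76),(-8,-12)),((-60,-95),(9,16)))%R); last by vm_compute.
rewrite /zmR !m00 !m10 !m11 /zR /=; split.
- by exists (-12, -19)%R; rewrite /zR /=; ring.
- by exists (9, 15)%R; rewrite /zR /=; ring.
- by exists (2, 3)%R; rewrite /zR /=; ring.
Qed.


Ltac zl := repeat first [apply: Zl_lam | apply: Zl_zR | apply: ev_Zl | apply: Zl1 | apply: Zl0
  | apply: Zl_int | apply: Zl_add | apply: Zl_opp | apply: Zl_mul].

Lemma dz_of n x y : Zl y -> x = n%:~R * y -> dz n x.
Proof. by move=> hy ->; apply: dz_mk. Qed.

Lemma G0_step i w : G0 i w -> exists w', G0 i.+1 w'.
Proof.
case=> [[[g1 g2] hc] [ta ha] [td hd]].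
set q : R := (5 ^+ i : int)%:~R.
have hP : (5 ^+ i.+1 : int)%:~R = 5 * q :> R by rewrite exprS intrM.
have hP2 : (5 ^+ i.+2 : int)%:~R = 5 * (5 * q) :> R by rewrite !exprS !intrM mulrA.
exists (Lw (5 ^+ i.+1 * g2) ++ w ++ Lw (5 ^+ i.+1 * (g1 - g2))).
rewrite /G0 ev_LgL m00 m10 m11.
have ea : ev w i0 i0 = lam + 5 * zR ta by rewrite -ha; ring.
have ed : ev w i1 i1 = lam - 1 + 5 * zR td by rewrite -hd; ring.
rewrite hP in hc.
rewrite !intrM hP ea ed hc /zR /=.
have l2 := lam2.
split.
- apply: (dz_of (y := - (g2%:~R * lam * zR ta + (g1 - g2)%:~R * lam * zR td) +
                     q * g2%:~R * (g1 - g2)%:~R * (lam + 1) * ev w i0 i1)).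
    by zl.
  rewrite hP2 /zR intrB; ring: l2.
- apply: (dz_of (y := zR ta - q * (g1 - g2)%:~R * lam * ev w i0 i1)).
    by zl.
  rewrite /zR intrB; ring: l2.
- apply: (dz_of (y := zR td - q * g2%:~R * lam * ev w i0 i1)).
    by zl.
  rewrite /zR; ring: l2.
Qed.

Lemma G0_all i : exists w, G0 i w.
Proof.
elim: i => [|i [w h]]; first by exists w0; exact: G0_base.
exact: G0_step h.
Qed.

Lemma par (x y : int) (r s : int) : 0 <= r < 2 -> 0 <= s < 2 ->
  (x * 2 + r) * (x * 2 + r) + (x * 2 + r) * (y * 2 + s) - (y * 2 + s) * (y * 2 + s) = 0 ->
  r = 0 /\ s = 0.
Proof.
move=> hr hs e.
set K := 2*x*x + 2*x*r + 2*x*y + x*s + r*y - 2*y*y - 2*y*s.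
have hK : 2 * K + (r*r + r*s - s*s) = 0 by rewrite -e /K; ring.
have [hr' hs'] : (r = 0 \/ r = 1) /\ (s = 0 \/ s = 1) by lia.
clearbody K; by case: hr' => ?; case: hs' => ?; subst r s; lia.
Qed.

Lemma desc n (a b : int) : (`|a| + `|b| <= n)%N -> a * a + a * b - b * b = 0 -> a = 0 /\ b = 0.
Proof.
elim: n a b => [|n IH] a b hn e.
  by move: hn; rewrite leqn0 addn_eq0 !absz_eq0 => /andP [/eqP -> /eqP ->].
have ea := divz_eq a 2; have eb := divz_eq b 2.
have ra : 0 <= (a %% 2)%Z < 2 by rewrite modz_ge0 // ltz_pmod.
have rb : 0 <= (b %% 2)%Z < 2 by rewrite modz_ge0 // ltz_pmod.
move: ea eb ra rb; set x := (a %/ 2)%Z; set y := (b %/ 2)%Z; set r := (a %% 2)%Z; set s := (b %% 2)%Z.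
move=> ea eb ra rb.
have [r0 s0] : r = 0 /\ s = 0.
  by apply: (@par x y) => //; rewrite -ea -eb.
rewrite r0 addr0 in ea; rewrite s0 addr0 in eb.
have e' : x * x + x * y - y * y = 0.
  have : 4 * (x * x + x * y - y * y) = 0 by rewrite -e ea eb; ring.
  clearbody x y; lia.
clearbody x y.
have [x0 y0] : x = 0 /\ y = 0.
  case: (eqVneq x 0) => [x0|x0].
    by move: e'; rewrite x0 => h; split => //; lia.
  apply: IH => //; move: hn; rewrite ea eb; lia.
by rewrite ea eb x0 y0.
Qed.

Lemma zR_conj x y : zR (x, y) * zR (x + y, - y)%R = (x * x + x * y - y * y)%:~R.
Proof. have l2 := lam2; rewrite /zR /= !intrD ?intrB !intrN !intrM; ring: l2. Qed.

Lemma indep x y : zR (x, y) = 0 -> x = 0 /\ y = 0.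
Proof.
move=> h; apply: (@desc (`|x| + `|y|)%N) => //.
have := zR_conj x y; rewrite h mul0r => /esym/eqP; rewrite intr_eq0 => /eqP.
by [].
Qed.

Lemma fact5 N : (0 < N)%N -> exists j M, N = (5 ^ j * M)%N /\ ~~ (5 %| M)%N.
Proof.
elim/ltn_ind: N => N IH hN.
case: (boolP (5 %| N)%N) => h5; last by exists 0%N, N; rewrite expn0 mul1n.
have hp : (0 < N %/ 5)%N by rewrite divn_gt0 // dvdn_leq.
have [j [M [e hM]]] := IH (N %/ 5)%N (ltn_Pdiv (isT : (1 < 5)%N) hN) hp.
exists j.+1, M; split => //.
by rewrite expnS -mulnA -e mulnC divnK.
Qed.

Definition allZ (A : 'M[R]_2) := forall i j, Zl (A i j).
Definition nilU q (A : 'M[R]_2) :=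
  [/\ allZ A, dz q (A i0 i0), dz q (A i1 i0) & dz q (A i1 i1)].

Lemma nil_prod q A B : nilU q A -> nilU q B -> forall i j, dz q ((A *m B) i j).
Proof.
case=> zA a00 a10 a11 [zB b00 b10 b11] i j; rewrite mulE.
case: (ord2P i) => ->; case: (ord2P j) => ->; apply: dz_add;
  solve [apply: dz_mulr => //; apply: zB | apply: dz_mull => //; apply: zA].
Qed.

Lemma allZ_mul A B : allZ A -> allZ B -> allZ (A *m B).
Proof. by move=> hA hB i j; rewrite mulE; apply: Zl_add; apply: Zl_mul. Qed.

Lemma mx2Z (m a b c d : R) : m *: mx2 a b c d = mx2 (m * a) (m * b) (m * c) (m * d).
Proof. by apply: mx2_eq; rewrite !mxE. Qed.
Lemma mx2D (a b c d a' b' c' d' : R) :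
  mx2 a b c d + mx2 a' b' c' d' = mx2 (a + a') (b + b') (c + c') (d + d').
Proof. by apply: mx2_eq; rewrite !mxE. Qed.

Lemma expand3 (m : R) (Z1 Z2 Z3 : 'M[R]_2) :
  (1%:M + m *: Z1) *m (1%:M + m *: Z2) *m (1%:M + m *: Z3) =
  1%:M + m *: (Z1 + Z2 + Z3) + (m * m) *: (Z1 *m Z2 + Z1 *m Z3 + Z2 *m Z3)
   + (m * m * m) *: (Z1 *m Z2 *m Z3).
Proof.
rewrite (mx2_eta Z1) (mx2_eta Z2) (mx2_eta Z3) mx2_1.
rewrite ?mx2Z ?mx2D ?mx2M ?mx2Z ?mx2D ?mx2M ?mx2Z ?mx2D ?mx2M ?mx2Z ?mx2D.
by congr mx2; ring.
Qed.


Lemma addE (A B : 'M[R]_2) i j : (A + B) i j = A i j + B i j.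
Proof. by rewrite mxE. Qed.
Lemma sclE (m : R) (A : 'M[R]_2) i j : (m *: A) i j = m * A i j.
Proof. by rewrite mxE. Qed.

Lemma cong3 (q M : int) Z1 Z2 Z3 : nilU q Z1 -> nilU q Z2 -> nilU q Z3 ->
  dz q (Z1 i0 i1 + Z2 i0 i1 + Z3 i0 i1) ->
  forall i j, dz (q * M)
    (((1%:M + M%:~R *: Z1) *m (1%:M + M%:~R *: Z2) *m (1%:M + M%:~R *: Z3)) i j
     - (1%:M : 'M[R]_2) i j).
Proof.
move=> h1 h2 h3 h01.
have hS : forall i j, dz q ((Z1 + Z2 + Z3) i j).
  move=> i j; rewrite !addE.
  case: h1 h2 h3 => [z1 a1 b1 c1] [z2 a2 b2 c2] [z3 a3 b3 c3].
  by case: (ord2P i) => ->; case: (ord2P j) => ->; rewrite ?addrA //;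
    repeat apply: dz_add.
have hQ2 : forall i j, dz q ((Z1 *m Z2 + Z1 *m Z3 + Z2 *m Z3) i j).
  by move=> i j; rewrite !addE; repeat apply: dz_add; apply: nil_prod.
have hQ3 : forall i j, dz q ((Z1 *m Z2 *m Z3) i j).
  move=> i j; rewrite mulE; case: h3 => z3 _ _ _.
  by apply: dz_add; apply: dz_mulr => //; apply: nil_prod.
move=> i j; rewrite expand3 !addE !sclE.
have -> : (1%:M : 'M[R]_2) i j + M%:~R * (Z1 + Z2 + Z3) i j +
    M%:~R * M%:~R * (Z1 *m Z2 + Z1 *m Z3 + Z2 *m Z3) i j +
    M%:~R * M%:~R * M%:~R * (Z1 *m Z2 *m Z3) i j - (1%:M : 'M[R]_2) i j =
    M%:~R * ((Z1 + Z2 + Z3) i j + (Z1 *m Z2 + Z1 *m Z3 + Z2 *m Z3) i j * M%:~R +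
             (Z1 *m Z2 *m Z3) i j * (M%:~R * M%:~R)) by ring.
rewrite mulrC; apply: dz_int_mul.
by repeat apply: dz_add => //; apply: dz_mulr => //; zl.
Qed.


Definition Zc w (k : int) : 'M[R]_2 :=
  mx2 (- (k%:~R * lam * (ev w i0 i0 * ev w i1 i0))) (k%:~R * lam * (ev w i0 i0 * ev w i0 i0))
      (- (k%:~R * lam * (ev w i1 i0 * ev w i1 i0))) (k%:~R * lam * (ev w i0 i0 * ev w i1 i0)).

Lemma conjZ w (M k : int) : ev (w ++ Tp (M * k) ++ invw w) = 1%:M + M%:~R *: Zc w k.
Proof. by rewrite ev_conj mx2_1 mx2Z mx2D intrM; congr mx2; ring. Qed.

Lemma TpZ (M k : int) : ev (Tp (M * k)) = 1%:M + M%:~R *: mx2 0 (k%:~R * lam) 0 0.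
Proof. by rewrite ev_Tp mx2_1 mx2Z mx2D intrM; congr mx2; ring. Qed.

Lemma allZ_mx2 a b c d : Zl a -> Zl b -> Zl c -> Zl d -> allZ (mx2 a b c d).
Proof.
move=> ha hb hc hd i j.
by case: (ord2P i) => ->; case: (ord2P j) => ->; rewrite ?m00 ?m01 ?m10 ?m11.
Qed.

Lemma nilU_Zc q w k : dz q (ev w i1 i0) -> nilU q (Zc w k).
Proof.
move=> hc; split; rewrite ?m00 ?m10 ?m11.
- by apply: allZ_mx2; zl.
- by apply: dz_opp; apply: dz_mull; last zl; apply: dz_mull => //; zl.
- by apply: dz_opp; apply: dz_mull; last zl; apply: dz_mull => //; zl.
- by apply: dz_mull; last zl; apply: dz_mull => //; zl.
Qed.

Lemma nilU_T q k : nilU q (mx2 0 (k%:~R * lam) 0 0).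
Proof.
by split; rewrite ?m00 ?m10 ?m11; [apply: allZ_mx2; zl | apply: dz0 | apply: dz0 | apply: dz0].
Qed.


Lemma dz_eq0 n x : x = 0 -> dz n x.
Proof. by move=> ->; apply: dz0. Qed.

Lemma sq_cong (a t x : R) : a = x + 5 * t -> Zl t -> Zl x ->
  exists e : zl, a * a = x * x + 5 * zR e.
Proof.
move=> -> ht hx.
have : Zl (2 * x * t + 5 * t * t) by zl.
by case=> e he; exists e; rewrite -he; ring.
Qed.

Lemma keyN (N : nat) : (0 < N)%N -> exists w, ~~ (5 %| count id w)%N /\
  (forall i j, dz N (ev w i j - (1%:M : 'M[R]_2) i j)).
Proof.
move=> hN.
have [j [M [eN hM]]] := fact5 hN.
have [w1 [hc1 [ta ha1] _]] := G0_all j.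
have l2 := lam2.
have ea1 : ev w1 i0 i0 = lam + 5 * zR ta by rewrite -ha1; ring.
have [e1 he1] := sq_cong ea1 (Zl_zR ta) Zl_lam.
have hc1' : dz 5 (ev w1 i1 i0) by move: hc1; rewrite exprS => /dz_dvd.
have [[u1 v1] hu1] : Zl (ev w1 i0 i0 * ev w1 i0 i0 - 1) by zl.
have [hu1' hv1'] : u1 - 5 * e1.1 = 0 /\ v1 - 1 - 5 * e1.2 = 0.
  apply: indep; rewrite /zR /= !intrB !intrM.
  have -> : u1%:~R = zR (u1, v1) - v1%:~R * lam by rewrite /zR /=; ring.
  rewrite -hu1 he1 /zR; ring: l2.
set w2 := w1 ++ w1.
have ea2 : ev w2 i0 i0 = ev w1 i0 i0 * ev w1 i0 i0 + ev w1 i0 i1 * ev w1 i1 i0.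
  by rewrite /w2 ev_cat mulE.
have ec2 : ev w2 i1 i0 = ev w1 i1 i0 * ev w1 i0 i0 + ev w1 i1 i1 * ev w1 i1 i0.
  by rewrite /w2 ev_cat mulE.
have hc2 : dz (5 ^+ j.+1) (ev w2 i1 i0).
  by rewrite ec2; apply: dz_add; [apply: dz_mulr | apply: dz_mull]; zl.
have [s hs] : dz 5 (ev w2 i0 i0 - (lam + 1)).
  rewrite ea2 he1 (_ : _ - _ = 5%:~R * zR e1 + ev w1 i0 i1 * ev w1 i1 i0); last by ring: l2.
  by apply: dz_add; [apply: dz_mk; zl | apply: dz_mull => //; zl].
have ea2' : ev w2 i0 i0 = lam + 1 + 5 * zR s by rewrite -hs; ring.
have [e2 he2] := sq_cong ea2' (Zl_zR s) (Zl_add Zl_lam Zl1).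
have [[u2 v2] hu2] : Zl (ev w2 i0 i0 * ev w2 i0 i0 - 1) by zl.
have [hu2' hv2'] : u2 - 1 - 5 * e2.1 = 0 /\ v2 - 3 - 5 * e2.2 = 0.
  apply: indep; rewrite /zR /= !intrB !intrM.
  have -> : u2%:~R = zR (u2, v2) - v2%:~R * lam by rewrite /zR /=; ring.
  rewrite -hu2 he2 /zR; ring: l2.
have [k1 [k2 [k3 [ek1 [ek2 ek3]]]]] : exists k1 k2 k3 : int,
  [/\ k1 = v2, k2 = - v1 & k3 = - (v2 * u1 - v1 * u2) - v2 + v1] by do 3 eexists.
exists ((w1 ++ Tp (M%:Z * k1) ++ invw w1) ++ ((w2 ++ Tp (M%:Z * k2) ++ invw w2) ++ Tp (M%:Z * k3))).
split.
  have [t1 ht1] := cnt_Tp (M%:Z * k1).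
  have [t2 ht2] := cnt_Tp (M%:Z * k2).
  have [t3 ht3] := cnt_Tp (M%:Z * k3).
  have eu1 : u1 = 5 * e1.1 by apply/eqP; rewrite -subr_eq0 hu1'.
  have ev1 : v1 = 1 + 5 * e1.2 by apply/eqP; rewrite -subr_eq0 -hv1'; apply/eqP; ring.
  have eu2 : u2 = 1 + 5 * e2.1 by apply/eqP; rewrite -subr_eq0 -hu2'; apply/eqP; ring.
  have ev2 : v2 = 3 + 5 * e2.2 by apply/eqP; rewrite -subr_eq0 -hv2'; apply/eqP; ring.
  have eC : (count id ((w1 ++ Tp (M%:Z * k1) ++ invw w1) ++
       ((w2 ++ Tp (M%:Z * k2) ++ invw w2) ++ Tp (M%:Z * k3))))%:Z =
     M%:Z + 5 * (M%:Z * (e1.2 + e2.1 + 5 * e1.2 * e2.1 - 3 * e1.1 - 5 * e2.2 * e1.1)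
                 + 3 * (count id w1)%:Z + t1 + t2 + t3).
    rewrite /w2 !count_cat !cnt_invw !count_cat !PoszD ht1 ht2 ht3.
    rewrite ek1 ek2 ek3 eu1 ev1 eu2 ev2; ring.
  move: eC; set C := count id _; set Z := (_ + t1 + t2 + t3) => eC.
  clearbody C Z; lia.
move=> i k.
rewrite [ev (_ ++ (_ ++ _))]ev_cat conjZ ev_cat conjZ TpZ mulmxA.
have hsum : dz (5 ^+ j.+1) (Zc w1 k1 i0 i1 + Zc w2 k2 i0 i1 + mx2 0 (k3%:~R * lam) 0 0 i0 i1).
  rewrite /Zc !m01.
  have e1' : ev w1 i0 i0 * ev w1 i0 i0 = zR (u1, v1) + 1 by rewrite -hu1; ring.
  have e2' : ev w2 i0 i0 * ev w2 i0 i0 = zR (u2, v2) + 1 by rewrite -hu2; ring.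
  rewrite e1' e2' ek1 ek2 ek3 /zR /= !intrD !intrN !intrB !intrM.
  apply: dz_eq0; ring.
have := cong3 M%:Z (nilU_Zc k1 hc1) (nilU_Zc k2 hc2) (nilU_T _ k3) hsum i k.
have -> : (5 ^+ j.+1 * M%:Z = N%:Z * 5 :> int).
  by rewrite eN PoszM -[Posz (5 ^ j)]natz natrX exprS; ring.
exact: dz_dvd.
Qed.


Lemma idealN (A : R -> Prop) : nonzero_ideal A -> exists N : nat, (0 < N)%N /\ A N%:R.
Proof.
case=> [[hZ h0 hsub hmul] [x [hx x0]]].
have [a [b ex]] := hZ x hx.
have hn : A (a * a + a * b - b * b)%:~R.
  rewrite -zR_conj mulrC; apply: hmul => //; first by exists (a + b), (- b).
  by rewrite /zR -ex.
have n0 : a * a + a * b - b * b != 0.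
  apply/eqP => e; have [a0 b0] := desc (leqnn _) e.
  by move: x0; rewrite ex a0 b0 mul0r addr0 eqxx.
move: hn n0; set n := a * a + a * b - b * b => hn n0.
exists `|n|%N; split; first by rewrite absz_gt0.
have : (Posz `|n| = n) \/ (Posz `|n| = - n) by lia.
rewrite pmulrn; case=> ->; first exact: hn.
by rewrite intrN -sub0r; apply: hsub.
Qed.

Lemma dzA (A : R -> Prop) (N : nat) x : is_ideal A -> A N%:R -> dz N x -> A x.
Proof.
case=> hZ h0 hsub hmul hN [z ->].
rewrite -pmulrn mulrC; apply: hmul => //.
by case: z => p q; exists p, q.
Qed.

Lemma key (A : R -> Prop) : nonzero_ideal A -> exists m, HA A m /\ ~ Kp m.
Proof.
move=> hA; have [N [hN hAN]] := idealN hA.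
have [w [hc hw]] := keyN hN.
exists (ev w); split; last exact: notK.
have hI := hA.1.
have h00 := hw i0 i0; have h11 := hw i1 i1; have h01 := hw i0 i1; have h10 := hw i1 i0.
rewrite !mxE /= ?subr0 in h00 h11 h01 h10.
split; first exact: wH5.
- exact: dzA hI hAN h00.
- exact: dzA hI hAN h11.
- exact: dzA hI hAN h01.
- exact: dzA hI hAN h10.
Qed.

End Aux.

Theorem proposition7p2 (R : realType) :
  ~ congruence (@H5_fifth R) /\ ~ congruence (@H5_comm R).
Proof.
split => -[A [hA hG]]; have [m [hm hK]] := key hA; apply: hK.
  by apply: fifth_K; apply: hG.
by apply: comm_K; apply: hG.
Qed.
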